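(* Let $G$ be a finitely generated subgroup of $\mathrm{Aut}(X^* )$. Then $G$ has well-approximated subgroups if and only if $G$ is LERF and has the congruence subgroup property.
   Context: $X^*$ is the free monoid on a finite set $X$, viewed as a rooted tree; $X^n$ is level $n$, $\mathrm{Aut}(X^* )$ the group of prefix-preserving bijections, and $\mathrm{st}_G(n)$ the subgroup of $G$ fixing every vertex of $X^n$. $G$ has well-approximated subgroups if $\bigcap_{n\ge0}H\,\mathrm{st}_G(n)=H$ for every finitely generated $H\le G$. $G$ is LERF if every finitely generated subgroup is an intersection of finite index subgroups. $G$ has the congruence subgroup property if every finite index subgroup of $G$ contains $\mathrm{st}_G(n)$ for some $n$. *)

(* Defs.v *)
From mathcomp Require Import all_boot.
From Stdlib Require List.

Set Implicit Arguments.
Unset Strict Implicit.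
Unset Printing Implicit Defensive.

Section TreeAut.
Variable X : finType.

(* Elements of Aut(X^star) are represented by their underlying maps on X^star = seq X. *)
Definition tmap := seq X -> seq X.

Definition tree_aut (f : tmap) : Prop :=
  bijective f /\ forall u v : seq X, prefix u v = prefix (f u) (f v).

Record is_subgroup (H : tmap -> Prop) : Prop := {
  sub_aut  : forall f, H f -> tree_aut f;
  sub_id   : H id;
  sub_comp : forall f g, H f -> H g -> H (f \o g);
  sub_inv  : forall f, H f -> exists2 g, H g & cancel f g
}.

Definition subgroup_of (H G : tmap -> Prop) : Prop :=
  is_subgroup H /\ forall f, H f -> G f.

Definition gen (l : list tmap) : tmap -> Prop :=
  fun f => forall K, is_subgroup K -> (forall g, List.In g l -> K g) -> K f.

Definition fin_gen (H : tmap -> Prop) : Prop :=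
  exists l : list tmap, (forall g, List.In g l -> H g) /\ (forall f, H f <-> gen l f).

Definition st (G : tmap -> Prop) (n : nat) : tmap -> Prop :=
  fun f => G f /\ forall v : seq X, size v = n -> f v = v.

Definition setmul (H K : tmap -> Prop) : tmap -> Prop :=
  fun f => exists h k, H h /\ K k /\ f = h \o k.

Definition finite_index (G K : tmap -> Prop) : Prop :=
  exists reps : list tmap, (forall r, List.In r reps -> G r) /\
    forall g, G g -> exists r, List.In r reps /\ exists k, K k /\ g = r \o k.

Definition well_approximated (G : tmap -> Prop) : Prop :=
  forall H, subgroup_of H G -> fin_gen H ->
    forall f, (forall n, setmul H (st G n) f) <-> H f.

Definition LERF (G : tmap -> Prop) : Prop :=
  forall H, subgroup_of H G -> fin_gen H ->
    forall f, H f <->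
      (forall K, subgroup_of K G -> finite_index G K ->
         (forall h, H h -> K h) -> K f).

Definition congruence_subgroup_property (G : tmap -> Prop) : Prop :=
  forall K, subgroup_of K G -> finite_index G K ->
    exists n, forall f, st G n f -> K f.

End TreeAut.

(* Main.v *)
Require Import Defs.
From mathcomp Require Import all_boot.
From Stdlib Require Import FunctionalExtensionality ClassicalEpsilon Classical.
From mathcomp Require Import zify.
Set Implicit Arguments. Unset Strict Implicit. Unset Printing Implicit Defensive.

Lemma prefix_eq_size (X : eqType) (s t : seq X) :
  prefix s t -> size s = size t -> s = t.
Proof. by rewrite prefixE => /eqP e hs; rewrite -e hs take_size. Qed.

Lemma prefix_common (X : eqType) (a b w : seq X) :
  prefix a w -> prefix b w -> size a = size b -> a = b.
Proof. by rewrite !prefixE => /eqP ea /eqP eb hs; rewrite -ea -eb hs. Qed.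

Definition parent (X : eqType) (p q : seq X) :=
  [/\ prefix p q, p <> q & forall z, prefix p z -> prefix z q -> z = p \/ z = q].

Lemma parent_size (X : eqType) (p q : seq X) : parent p q -> size q = (size p).+1.
Proof.
case=> pq npq mid.
have le := size_prefix pq.
have lt : size p < size q.
  rewrite ltn_neqAle le andbT; apply/eqP => e; exact: npq (prefix_eq_size pq e).
have pz : prefix p (take (size p).+1 q).
  by move: pq; rewrite !prefixE take_takel ?leqnSn.
have zq : prefix (take (size p).+1 q) q by apply: prefix_take.
case: (mid _ pz zq) => e; move: (congr1 size e); rewrite size_take.
  case: ifP => _ h; last by rewrite h ltnn in lt.
  by move/eqP: h; rewrite eqn_leq ltnn.
case: ifP => c h; first by rewrite h ltnn in c.
by apply/eqP; rewrite eqn_leq lt andbT leqNgt c.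
Qed.

Lemma parent_rcons (X : eqType) (u : seq X) a : parent u (rcons u a).
Proof.
have pu : prefix u (rcons u a) by rewrite prefixE -cats1 take_size_cat.
split=> //.
  move=> e; move: (congr1 size e); rewrite size_rcons; lia.
move=> z uz zv.
have := size_prefix uz; have := size_prefix zv; rewrite size_rcons leq_eqVlt ltnS.
case/orP=> [/eqP e _|h1 h2].
  by right; apply: prefix_eq_size => //; rewrite size_rcons.
by left; apply/esym/prefix_eq_size => //; apply/eqP; rewrite eqn_leq h1 h2.
Qed.

Lemma aut_inv (X : finType) (f : tmap X) :
  tree_aut f -> exists g, cancel f g /\ cancel g f.
Proof. by case=> [[g fg gf] _]; exists g. Qed.

Lemma aut_nil (X : finType) (f : tmap X) : tree_aut f -> f [::] = [::].
Proof.
move=> af; have [g [fg gf]] := aut_inv af; case: af => _ pr.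
have := prefix0s (g [::]); rewrite pr gf.
by case: (f [::]).
Qed.

Lemma aut_parent (X : finType) (f : tmap X) u v :
  tree_aut f -> parent u v -> parent (f u) (f v).
Proof.
move=> af; have [g [fg gf]] := aut_inv af; case: af => _ pr.
case=> uv nuv mid; split; first by rewrite -pr.
  by move=> e; apply: nuv; rewrite -(fg u) e fg.
move=> z h1 h2; rewrite -(gf z) -!pr in h1 h2.
by case: (mid _ h1 h2) => <-; rewrite gf; [left|right].
Qed.

Lemma aut_size (X : finType) (f : tmap X) v : tree_aut f -> size (f v) = size v.
Proof.
move=> af; elim/last_ind: v => [|u a IH]; first by rewrite aut_nil.
by rewrite (parent_size (aut_parent af (parent_rcons u a))) IH size_rcons.
Qed.

Lemma mem_In (T : eqType) (x : T) (s : seq T) : x \in s -> List.In x s.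
Proof. elim: s => //= y s IH; rewrite in_cons => /orP [/eqP ->|/IH]; by [left|right]. Qed.

Lemma inv_cancel (T : Type) (f g : T -> T) : bijective f -> cancel f g -> cancel g f.
Proof. by case=> b fb bf fg y; rewrite -{1}(bf y) fg bf. Qed.

Lemma ginv (X : finType) (G : tmap X -> Prop) f : is_subgroup G -> G f ->
  exists g, [/\ G g, cancel f g & cancel g f].
Proof.
move=> HG Gf; have [g Gg fg] := sub_inv HG Gf.
exists g; split=> //; apply: inv_cancel fg.
by case: (sub_aut HG Gf).
Qed.

Lemma st_mono (X : finType) (G : tmap X -> Prop) n m f :
  is_subgroup G -> n <= m -> st G m f -> st G n f.
Proof.
move=> HG nm [Gf fm]; split=> // v sv.
have af := sub_aut HG Gf.
case: v sv => [|x v'] sv; first by rewrite aut_nil.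
set w := (x :: v') ++ nseq (m - n) x.
have vw : prefix (x :: v') w by rewrite prefixE take_size_cat.
have sw : size w = m by rewrite size_cat size_nseq sv subnKC.
have := vw; case: af => _ pr; rewrite pr (fm _ sw) => fvw.
apply: (prefix_common fvw vw); rewrite aut_size //; split=> //.
by case: (sub_aut HG Gf).
Qed.

Lemma st_conj (X : finType) (G : tmap X -> Prop) n g g' s :
  is_subgroup G -> G g -> G g' -> cancel g g' -> st G n s -> st G n (g' \o s \o g).
Proof.
move=> HG Gg Gg' gg' [Gs sn]; split.
  by apply: (sub_comp HG) Gg; apply: (sub_comp HG).
move=> v sv /=; have sg : size (g v) = n by rewrite aut_size //; exact: (sub_aut HG Gg).
by rewrite sn.
Qed.

Lemma st_finite_index (X : finType) (G : tmap X -> Prop) n :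
  is_subgroup G -> finite_index G (st G n).
Proof.
move=> HG.
pose T := (n.-tuple X)%type.
pose code (g : tmap X) : {ffun T -> T} := [ffun t : T => insubd t (g (val t))].
pose P c g := G g /\ ((exists g', G g' /\ code g' = c) -> code g = c).
have Pex c : exists g, P c g.
  case: (classic (exists g', G g' /\ code g' = c)) => [[g' [Gg' e]]|ne].
    by exists g'; split=> // _.
  by exists id; split; [exact: sub_id HG| move=> h; case: (ne h)].
pose rep c := epsilon (inhabits (@id (seq X))) (P c).
have repP c : P c (rep c) by apply: epsilon_spec; apply: Pex.
exists (map rep (enum {ffun T -> T})); split.
  by move=> r /List.in_map_iff [c [<- _]]; case: (repP c).
move=> g Gg; exists (rep (code g)); split.
  by apply: List.in_map; apply: mem_In; rewrite mem_enum.
case: (repP (code g)) => Gr cr; have {}cr := cr (ex_intro _ g (conj Gg erefl)).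
have [rb [Grb rrb rbr]] := ginv HG Gr.
exists (rb \o g); split; last by apply: functional_extensionality => x /=; rewrite rbr.
split; first exact: (sub_comp HG Grb Gg).
move=> v sv /=.
have hv : size v == n by rewrite sv.
have := congr1 (fun c : {ffun T -> T} => val (c (@Tuple n X v hv))) cr.
rewrite /= !ffunE !val_insubd /= !aut_size ?hv; last 2 first.
- exact: (sub_aut HG Gg).
- exact: (sub_aut HG Gr).
by move=> <-; rewrite rrb.
Qed.

Lemma st_id (X : finType) (G : tmap X -> Prop) n : is_subgroup G -> st G n id.
Proof. by move=> HG; split=> //; exact: (sub_id HG). Qed.

Lemma st_comp (X : finType) (G : tmap X -> Prop) n a b :
  is_subgroup G -> st G n a -> st G n b -> st G n (a \o b).
Proof.
move=> HG [Ga ha] [Gb hb]; split; first exact: (sub_comp HG Ga Gb).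
by move=> v sv /=; rewrite hb ?ha.
Qed.

Lemma st_inv (X : finType) (G : tmap X -> Prop) n a a' :
  G a' -> cancel a a' -> st G n a -> st G n a'.
Proof. by move=> Ga' aa' [Ga ha]; split=> // v sv; rewrite -{1}(ha v sv) aa'. Qed.

Lemma dirA (X : finType) (G : tmap X -> Prop) :
  is_subgroup G -> LERF G -> congruence_subgroup_property G -> well_approximated G.
Proof.
move=> HG L C H HsG fgH f; split; last first.
  by move=> Hf n; exists f, id; split=> //; split=> //; exact: st_id.
move=> hyp; apply/(L H HsG fgH f) => K KsG Kfi HK.
have [n hn] := C K KsG Kfi.
have [h [k [Hh [stk ->]]]] := hyp n.
exact: (sub_comp KsG.1 (HK _ Hh) (hn _ stk)).
Qed.

Lemma setmul_sub (X : finType) (G H : tmap X -> Prop) n :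
  is_subgroup G -> subgroup_of H G -> subgroup_of (setmul H (st G n)) G.
Proof.
move=> HG [HH HHG].
have inG f : setmul H (st G n) f -> G f.
  by case=> h [s [Hh [[Gs _] ->]]]; exact: (sub_comp HG (HHG _ Hh) Gs).
split=> //; split.
- by move=> f /inG /(sub_aut HG).
- by exists id, id; split; [exact: (sub_id HH)|split; [exact: st_id|]].
- move=> f g [h1 [s1 [Hh1 [st1 ->]]]] [h2 [s2 [Hh2 [st2 ->]]]].
  have [h2' [Hh2' c1 c2]] := ginv HH Hh2.
  exists (h1 \o h2), ((h2' \o s1 \o h2) \o s2); split; first exact: (sub_comp HH Hh1 Hh2).
  split; last by apply: functional_extensionality => x /=; rewrite c2.
  apply: st_comp => //; apply: st_conj => //; exact: HHG.
- move=> f [h [s [Hh [sts ->]]]].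
  have [h' [Hh' c1 c2]] := ginv HH Hh.
  have [s' [Gs' d1 d2]] := ginv HG sts.1.
  exists (h' \o (h \o s' \o h')).
    exists h', (h \o s' \o h'); split=> //; split=> //.
    by apply: st_conj => //; [exact: HHG|exact: HHG|apply: st_inv sts].
  by move=> x /=; rewrite !c1 d1.
Qed.

Lemma dirB (X : finType) (G : tmap X -> Prop) :
  is_subgroup G -> well_approximated G -> LERF G.
Proof.
move=> HG WA H HsG fgH f; split.
  by move=> Hf K _ _ HK; exact: HK.
move=> hyp; apply/(WA H HsG fgH f) => n; apply: hyp.
- exact: setmul_sub.
- have [reps [rG cov]] := st_finite_index n HG.
  exists reps; split=> // g Gg; have [r [Rr [k [stk ->]]]] := cov g Gg.
  exists r; split=> //; exists k; split=> //.
  exists id, k; split; first exact: (sub_id HsG.1).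
  by split.
- by move=> h Hh; exists h, id; split=> //; split=> //; exact: st_id.
Qed.

Inductive mon (X : finType) (L : list (tmap X)) : tmap X -> Prop :=
| mon_id : mon L id
| mon_cons s g : List.In s L -> mon L g -> mon L (s \o g).

Lemma mon_comp (X : finType) (L : list (tmap X)) f g :
  mon L f -> mon L g -> mon L (f \o g).
Proof.
move=> mf mg; elim: mf => [|s g0 Ls _ IH]; first exact: mg.
exact: (mon_cons Ls IH).
Qed.

Lemma mon_inv (X : finType) (L : list (tmap X)) f :
  (forall s, List.In s L -> exists s', List.In s' L /\ cancel s s') ->
  mon L f -> exists g, mon L g /\ cancel f g.
Proof.
move=> Linv; elim=> [|s g0 Ls _ [g0' [m0 c0]]]; first by exists id; split=> //; exact: mon_id.
have [s' [Ls' cs]] := Linv s Ls.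
exists (g0' \o s'); split; last by move=> x /=; rewrite cs c0.
apply: mon_comp m0 _; exact: (mon_cons Ls' (mon_id L)).
Qed.

Lemma gen_sub (X : finType) (S : list (tmap X)) (K : tmap X -> Prop) :
  is_subgroup K -> (forall s, List.In s S -> K s) -> forall f, gen S f -> K f.
Proof. by move=> HK SK f; apply. Qed.

Lemma gen_subgroup (X : finType) (G : tmap X -> Prop) (S : list (tmap X)) :
  is_subgroup G -> (forall s, List.In s S -> G s) -> is_subgroup (gen S).
Proof.
move=> HG SG.
have inG := gen_sub HG SG.
split.
- by move=> f /inG /(sub_aut HG).
- by move=> K HK _; exact: (sub_id HK).
- by move=> f g hf hg K HK SK; exact: (sub_comp HK (hf K HK SK) (hg K HK SK)).
- move=> f hf; have [g [Gg fg gf]] := ginv HG (inG _ hf).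
  exists g => // K HK SK; have [g' Kg' fg'] := sub_inv HK (hf K HK SK).
  suff -> : g = g' by [].
  by apply: functional_extensionality => y; rewrite -{2}(gf y) fg'.
Qed.

Lemma dirC (X : finType) (G : tmap X -> Prop) :
  is_subgroup G -> fin_gen G -> well_approximated G -> congruence_subgroup_property G.
Proof.
move=> HG [l [lG Gl]] WA K [HK KG] [R [RG cov]].
pose inv (s : tmap X) := epsilon (inhabits (@id (seq X)))
  (fun g => G s -> [/\ G g, cancel s g & cancel g s]).
have invP s : G s -> [/\ G (inv s), cancel s (inv s) & cancel (inv s) s].
  apply: (epsilon_spec (inhabits (@id (seq X))) (fun g => G s -> [/\ G g, cancel s g & cancel g s])).
  case: (classic (G s)) => [Gs|nGs].
    by have [g hg] := ginv HG Gs; exists g.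
  by exists id.
pose L' := (l ++ List.map inv l)%list.
have L'G s : List.In s L' -> G s.
  move=> hs; case: (List.in_app_or _ _ _ hs) => [/lG //|/List.in_map_iff [t [<- lt]]].
  by case: (invP t (lG t lt)).
have L'inv s : List.In s L' -> exists s', List.In s' L' /\ cancel s s'.
  move=> hs; case: (List.in_app_or _ _ _ hs) => [ls|/List.in_map_iff [t [<- lt]]].
    exists (inv s); split; first by apply: List.in_or_app; right; apply: List.in_map.
    by case: (invP s (lG s ls)).
  exists t; split; first by apply: List.in_or_app; left.
  by case: (invP t (lG t lt)).
have monG f : mon L' f -> G f.
  by elim=> [|s g Ls _ Gg]; [exact: (sub_id HG)|exact: (sub_comp HG (L'G s Ls) Gg)].
have Gmon f : G f -> mon L' f.
  move/Gl => gf; apply: gf.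
    split.
    - by move=> g /monG /(sub_aut HG).
    - exact: mon_id.
    - by move=> *; apply: mon_comp.
    - move=> g mg; have [g' [mg' c]] := mon_inv L'inv mg; by exists g'.
  move=> g lg; apply: (mon_cons _ (mon_id L')); apply: List.in_or_app; by left.
pose dec (g : tmap X) := epsilon (inhabits (@id (seq X), @id (seq X)))
  (fun p => G g -> [/\ List.In p.1 R, K p.2 & g = p.1 \o p.2]).
have decP g : G g -> [/\ List.In (dec g).1 R, K (dec g).2 & g = (dec g).1 \o (dec g).2].
  apply: (epsilon_spec (inhabits (@id (seq X), @id (seq X)))
    (fun p => G g -> [/\ List.In p.1 R, K p.2 & g = p.1 \o p.2])).
  case: (classic (G g)) => [Gg|nGg]; last by exists (id, id).
  by have [r [Rr [k [Kk e]]]] := cov g Gg; exists (r, k).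
pose R' := (@id (seq X)) :: R.
have R'G r : List.In r R' -> G r by case=> [<-|/RG //]; exact: (sub_id HG).
pose S := List.flat_map (fun r => List.map (fun s => (dec (s \o r)).2) L') R'.
have inS r s : List.In r R' -> List.In s L' -> List.In (dec (s \o r)).2 S.
  by move=> Rr Ls; apply/List.in_flat_map; exists r; split=> //; apply: List.in_map.
have SK k : List.In k S -> K k.
  case/List.in_flat_map => r [Rr /List.in_map_iff [s [<- Ls]]].
  by case: (decP _ (sub_comp HG (L'G s Ls) (R'G r Rr))).
have SG k : List.In k S -> G k by move/SK/KG.
pose H := gen S.
have HH : is_subgroup H := gen_subgroup HG SG.
have HK' := gen_sub HK SK.
have HsG : subgroup_of H G by split=> // f /HK' /KG.
have fgH : fin_gen H.
  by exists S; split=> // s Ss K' HK'' SK'; exact: SK'.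
have cos g : mon L' g -> forall r, List.In r R' ->
    exists r', List.In r' R' /\ exists h, H h /\ g \o r = r' \o h.
  elim=> [|s g0 Ls _ IH] r Rr.
    by exists r; split=> //; exists id; split=> //; exact: (sub_id HH).
  have [r1 [Rr1 [h1 [Hh1 e1]]]] := IH r Rr.
  have [d1 d2 d3] := decP _ (sub_comp HG (L'G s Ls) (R'G r1 Rr1)).
  exists (dec (s \o r1)).1; split; first by right.
  exists ((dec (s \o r1)).2 \o h1); split.
    by apply: (sub_comp HH) Hh1 => K' HK'' SK'; apply: SK'; apply: inS.
  apply: functional_extensionality => x /=.
  have := congr1 (fun F => F x) e1; rewrite /= => ->.
  by have := congr1 (fun F => F (h1 x)) d3.
have cosG g : G g -> exists r, List.In r R' /\ exists h, H h /\ g = r \o h.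
  move=> Gg; have [r' [Rr' [h [Hh e]]]] := cos g (Gmon g Gg) id (or_introl erefl).
  by exists r'; split=> //; exists h.
pose Q N r := forall rb, G rb -> cancel r rb -> setmul H (st G N) rb -> H rb.
have Qmono N M r : N <= M -> Q N r -> Q M r.
  move=> NM q rb Grb c [h [s [Hh [sts e]]]]; apply: q => //.
  by exists h, s; split=> //; split=> //; apply: st_mono sts.
have Qex r : G r -> exists N, Q N r.
  move=> Gr; apply: NNPP => nQ.
  have [rb [Grb c1 c2]] := ginv HG Gr.
  have uniq rb' : cancel r rb' -> rb' = rb.
    by move=> c; apply: functional_extensionality => y; rewrite -{1}(c2 y) c.
  have hall : forall n, setmul H (st G n) rb.
    move=> n; apply: NNPP => ns; apply: nQ; exists n => rb' _ c' sm.
    by case: ns; rewrite -(uniq _ c').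
  apply: nQ; exists 0 => rb' _ c' _; rewrite (uniq _ c').
  exact: (proj1 (WA H HsG fgH rb) hall).
have QN' : forall Rs, (forall r, List.In r Rs -> G r) ->
    exists N, forall r, List.In r Rs -> Q N r.
  elim=> [|r Rs IH] RsG; first by exists 0.
  have [N1 q1] := Qex r (RsG r (or_introl erefl)).
  have [N2 q2] := IH (fun r' h => RsG r' (or_intror h)).
  exists (maxn N1 N2) => r' [<-|h].
    by apply: Qmono q1; rewrite leq_maxl.
  by apply: Qmono (q2 r' h); rewrite leq_maxr.
have [N qN] := QN' R' R'G; exists N => f stf.
have [r [Rr [h [Hh e]]]] := cosG f stf.1.
have [rb [Grb c1 c2]] := ginv HG (R'G r Rr).
have [f' [Gf' d1 d2]] := ginv HG stf.1.
have Hrb : H rb.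
  apply: (qN r Rr rb Grb c1); exists h, f'; split=> //; split.
    exact: st_inv stf.
  apply: functional_extensionality => y /=.
  have := congr1 (fun F => F (f' y)) e; rewrite /= d2 => ey.
  by rewrite {1}ey c1.
have [g Hg cg] := sub_inv HH Hrb.
have erg : r = g by apply: functional_extensionality => x; rewrite -{2}(c1 x) cg.
rewrite e erg; apply: HK'; exact: (sub_comp HH Hg Hh).
Qed.

Theorem lemma2p12 (X : finType) (G : tmap X -> Prop) :
  is_subgroup G -> fin_gen G ->
  (well_approximated G <-> LERF G /\ congruence_subgroup_property G).
Proof.
move=> HG fgG; split.
  by move=> WA; split; [exact: dirB|exact: dirC].
by case=> L C; exact: dirA.
Qed.
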